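(* Let $E$ be finite, $\Omega=E^{\mathbb{Z}}$ with left shift $S$, and fix a letter $\mathtt a\in E$; write $\mathbf{a}$ for the configuration with all coordinates equal to $\mathtt a$. (i) If $\phi:\Omega\to\mathbb{R}$ is continuous with the extensibility property and $\rho^\phi$ denotes its cocycle $\rho^\phi(\xi,\eta)=\lim_{n\to\infty}\sum_{i=-n}^{n}[\phi(S^i\xi)-\phi(S^i\eta)]$ (defined for $\xi,\eta$ differing at finitely many sites), then the family $\gamma^\phi=(\gamma^\phi_\Lambda)_{\Lambda\subset\mathbb{Z}\text{ finite}}$ given by $$\gamma^\phi_\Lambda(\omega_\Lambda|\omega_{\Lambda^c})=\Big(\sum_{\xi_\Lambda\in E^\Lambda}e^{\rho^\phi(\xi_\Lambda\omega_{\mathbb{Z}\setminus\Lambda},\,\omega)}\Big)^{-1},\qquad\omega\in\Omega,$$ is a translation-invariant Gibbsian specification. (ii) If $\gamma=(\gamma_\Lambda)$ is a translation-invariant Gibbsian specification on $\Omega$, then $$\phi_\gamma(\omega)=\log\frac{\gamma_{\{0\}}(\omega_0\,|\,\mathbf a_{-\infty}^{-1}\omega_1^{\infty})}{\gamma_{\{0\}}(\mathtt a\,|\,\mathbf a_{-\infty}^{-1}\omega_1^{\infty})},\qquad\omega\in\Omega,$$ is a continuous function with the extensibility property and $\gamma^{\phi_\gamma}=\gamma$.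
   Context: $E$ finite, discrete; $\Omega=E^{\mathbb{Z}}$ with product topology; $(S\omega)_i=\omega_{i+1}$. For $\omega\in\Omega$, $a\in E$, $\omega^a$ is the configuration equal to $a$ at $0$ and $\omega_k$ at $k\ne0$. A continuous $\phi$ has the extensibility property if for all $a,\tilde a\in E$, $\sum_{i=-n}^{n}[\phi(S^i\omega^a)-\phi(S^i\omega^{\tilde a})]$ converges uniformly in $\omega$ as $n\to\infty$ (then the limit $\rho^\phi(\xi,\eta)$ exists for all $\xi,\eta$ differing at finitely many sites). $\mathbf a_{-\infty}^{-1}\omega_1^\infty$ denotes the condition on sites $\ne0$ equal to $\mathtt a$ at negative sites and to $\omega_k$ at sites $k\ge1$; for finite $\Lambda$, $\xi_\Lambda\omega_{\mathbb{Z}\setminus\Lambda}$ equals $\xi$ on $\Lambda$ and $\omega$ elsewhere. A specification is a family $(\gamma_\Lambda)_{\Lambda\text{ finite}}$ of probabilities $\gamma_\Lambda(\cdot|\omega_{\Lambda^c})$ on $E^\Lambda$ depending only on $\omega_{\Lambda^c}$, consistent: with $\gamma_\Lambda(f|\omega)=\sum_{\xi_\Lambda}\gamma_\Lambda(\xi_\Lambda|\omega_{\Lambda^c})f(\xi_\Lambda\omega_{\Lambda^c})$, for finite $\Delta\subset\Lambda$, $\sum_{\xi_\Lambda}\gamma_\Lambda(\xi_\Lambda|\omega_{\Lambda^c})\gamma_\Delta(f|\xi_\Lambda\omega_{\Lambda^c})=\gamma_\Lambda(f|\omega)$. Gibbsian means non-null ($\inf_\omega\gamma_\Lambda(\omega_\Lambda|\omega_{\Lambda^c})>0$)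 and continuous ($\omega\mapsto\gamma_\Lambda(\omega_\Lambda|\omega_{\Lambda^c})$ continuous) for every finite $\Lambda$. Translation-invariant means $\gamma_{\Lambda+1}(\omega_{\Lambda+1}|\omega_{(\Lambda+1)^c})=\gamma_\Lambda((S\omega)_\Lambda|(S\omega)_{\Lambda^c})$ for all finite $\Lambda$ and $\omega$. *)

(* Defs.v *)
From HB Require Import structures.
From mathcomp Require Import all_boot all_order all_algebra.
From mathcomp Require Import finmap.
From mathcomp Require Import all_classical all_reals all_analysis.

Set Implicit Arguments. Unset Strict Implicit. Unset Printing Implicit Defensive.
Import Order.TTheory GRing.Theory Num.Theory.
Import numFieldNormedType.Exports.
Local Open Scope ring_scope.

Section Defs.
Variables (E : finType) (R : realType).

Definition config := int -> E.

Definition shiftn (i : int) (w : config) : config := fun k => w (k + i).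
Definition shift : config -> config := shiftn 1.

Definition upd (w : config) (k : int) (a : E) : config :=
  fun j => if j == k then a else w j.

Definition glue (L : {fset int}) (xi : {ffun L -> E}) (w : config) : config :=
  fun k => match (insub k : option L) with Some k' => xi k' | None => w k end.

Definition psum (f : int -> R) (n : nat) : R :=
  \sum_(i < (2 * n).+1) f (i%:Z - n%:Z).

(* continuity for the product topology of E^Z (E finite, discrete):
   cylinder sets fixing the coordinates in [-N,N] form a neighbourhood base *)
Definition cont (f : config -> R) : Prop :=
  forall (w : config) (eps : R), 0 < eps -> exists N : nat,
    forall w' : config, (forall k : int, `|k| <= N%:Z -> w' k = w k) ->
      `|f w' - f w| < eps.

Definition ext_prop (phi : config -> R) : Prop :=
  forall a b : E, exists Lim : config -> R,
    forall eps : R, 0 < eps -> exists N : nat, forall n : nat, (N <= n)%N ->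
      forall w : config,
        `| psum (fun i => phi (shiftn i (upd w 0 a)) - phi (shiftn i (upd w 0 b))) n
           - Lim w | < eps.

Definition rho (phi : config -> R) (xi eta : config) : R :=
  limn (fun n => psum (fun i => phi (shiftn i xi) - phi (shiftn i eta)) n).

(* specification encoded as gam L w = gamma_L(w_L | w_(L^c)) ;
   hence gamma_L(xi_L | w_(L^c)) = gam L (glue xi w) *)
Definition cond_exp (gam : {fset int} -> config -> R) (L : {fset int})
    (f : config -> R) (w : config) : R :=
  \sum_(xi : {ffun L -> E}) gam L (glue xi w) * f (glue xi w).

Definition is_specification (gam : {fset int} -> config -> R) : Prop :=
  [/\ forall (L : {fset int}) (w : config), 0 <= gam L w,
      forall (L : {fset int}) (w : config), \sum_(xi : {ffun L -> E}) gam L (glue xi w) = 1 &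
      forall (L D : {fset int}), fsubset D L -> forall (f : config -> R) (w : config),
        \sum_(xi : {ffun L -> E}) gam L (glue xi w) * cond_exp gam D f (glue xi w)
        = cond_exp gam L f w].

Definition non_null (gam : {fset int} -> config -> R) : Prop :=
  forall L : {fset int}, exists c : R, 0 < c /\ forall w, c <= gam L w.

Definition spec_continuous (gam : {fset int} -> config -> R) : Prop :=
  forall L : {fset int}, cont (gam L).

Definition is_gibbsian (gam : {fset int} -> config -> R) : Prop :=
  [/\ is_specification gam, non_null gam & spec_continuous gam].

Definition translation_invariant (gam : {fset int} -> config -> R) : Prop :=
  forall (L : {fset int}) (w : config),
    gam [fset (k + 1)%R | k in L]%fset w = gam L (shift w).

Definition TI_gibbsian (gam : {fset int} -> config -> R) : Prop :=
  is_gibbsian gam /\ translation_invariant gam.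

Definition gammaphi (phi : config -> R) (L : {fset int}) (w : config) : R :=
  (\sum_(xi : {ffun L -> E}) expR (rho phi (glue xi w) w))^-1.

Definition cond_a (a : E) (w : config) : config :=
  fun k => if k < 0 then a else w k.

Definition phi_gamma (gam : {fset int} -> config -> R) (a : E) (w : config) : R :=
  ln (gam [fset (0 : int)]%fset (cond_a a w) / gam [fset (0 : int)]%fset (upd (cond_a a w) 0 a)).

End Defs.

(* Main.v *)
Require Import Defs.
From HB Require Import structures.
From mathcomp Require Import all_boot all_order all_algebra.
From mathcomp Require Import finmap.
From mathcomp Require Import all_classical all_reals all_analysis.
From mathcomp Require Import zify ring lra.
Import Order.TTheory GRing.Theory Num.Theory.
Import numFieldNormedType.Exports.
Local Open Scope ring_scope.
Set Implicit Arguments. Unset Strict Implicit. Unset Printing Implicit Defensive.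
Local Notation glue := Defs.glue.
Local Notation shift := Defs.shift.
Local Notation shiftn := Defs.shiftn.
Local Notation upd := Defs.upd.
Local Notation psum := Defs.psum.
Local Notation rho := Defs.rho.
Local Notation cont := Defs.cont.
Local Notation cond_a := Defs.cond_a.
Section A.
Variables (E : finType) (R : realType).
Local Notation config := (config E).

Definition agree (N : nat) (v w : config) := forall k : int, `|k| <= N%:Z -> v k = w k.
Definition inf (P : nat -> Prop) := forall m, exists n, (m <= n)%N /\ P n.

Lemma pigeon P (c : nat -> E) : inf P -> exists e, inf (fun n => P n /\ c n = e).
Proof.
move=> HP; apply: contrapT; rewrite -forallNE => H.
have H' : forall e, exists m, forall n, (m <= n)%N -> ~ (P n /\ c n = e).
  move=> e; move: (H e); rewrite /inf -existsNE => -[m Hm]; exists m => n Hmn Hn.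
  by apply: Hm; exists n.
have [f Hf] := choice H'.
have [n [Hn Pn]] := HP (\max_e f e).
by apply: (Hf (c n) n) => //; exact: leq_trans (leq_bigmax (c n)) Hn.
Qed.

Definition cho (u : nat -> config) (P : nat -> Prop) (j : int) : E :=
  odflt (u 0%N j) [pick e | `[< inf (fun n => P n /\ u n j = e) >] ].

Lemma cho_inf u P j : inf P -> inf (fun n => P n /\ u n j = cho u P j).
Proof.
move=> HP; rewrite /cho; case: pickP => [e /asboolP //|H].
have [e He] := pigeon (fun n => u n j) HP.
by move: (H e); rewrite asboolT.
Qed.

Fixpoint Ps (u : nat -> config) (k : nat) : nat -> Prop :=
  match k with
  | 0 => fun _ => True
  | k'.+1 => match (choice.unpickle k' : option int) with
             | Some j => fun n => Ps u k' n /\ u n j = cho u (Ps u k') j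
             | None => Ps u k' end end.

Lemma Ps_inf u k : inf (Ps u k).
Proof.
elim: k => [|k IH] /=; first by move=> m; exists m.
by case: (choice.unpickle k) => [j|//]; exact: cho_inf.
Qed.

Lemma Ps_mono u k n : Ps u k.+1 n -> Ps u k n.
Proof. by rewrite /=; case: (choice.unpickle k) => // j []. Qed.

Lemma Ps_monoL u k k' n : (k <= k')%N -> Ps u k' n -> Ps u k n.
Proof.
elim: k' => [|k' IH]; first by rewrite leqn0 => /eqP ->.
rewrite leq_eqVlt => /orP [/eqP -> //| Hk] /Ps_mono; exact: IH.
Qed.

Definition clus u : config := fun j => cho u (Ps u (choice.pickle j)) j.

Lemma Ps_val u j n : Ps u (choice.pickle j).+1 n -> u n j = clus u j.
Proof. by rewrite /= choice.pickleK => -[]. Qed.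

Lemma pickle_bound (K : nat) : exists M, forall k : int, `|k| <= K%:Z -> ((choice.pickle k).+1 <= M)%N.
Proof.
elim: K => [|K [M HM]].
  exists (choice.pickle (0:int)).+1 => k Hk.
  by have -> : k = 0 by lia.
exists (maxn M (maxn (choice.pickle (K.+1%:Z)).+1 (choice.pickle (- K.+1%:Z)).+1)) => k Hk.
have [H|[H|H]] : `|k| <= K%:Z \/ k = K.+1%:Z \/ k = - K.+1%:Z by lia.
- exact: leq_trans (HM _ H) (leq_maxl _ _).
- by rewrite H; apply: leq_trans (leq_maxr _ _); exact: leq_maxl.
- by rewrite H; apply: leq_trans (leq_maxr _ _); exact: leq_maxr.
Qed.

Lemma cluster (u : nat -> config) : exists w, forall K m, exists n, (m <= n)%N /\ agree K (u n) w.
Proof.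
exists (clus u) => K m.
have [M HM] := pickle_bound K.
have [n [Hmn Hn]] := Ps_inf u M m.
exists n; split => // k Hk; apply: Ps_val; exact: Ps_monoL (HM _ Hk) Hn.
Qed.

Lemma agree_mono N N' v w : (N <= N')%N -> agree N' v w -> agree N v w.
Proof. move=> HN H k Hk; apply: H; apply: le_trans Hk _; by rewrite lez_nat. Qed.

Lemma agree_sym N v w : agree N v w -> agree N w v.
Proof. by move=> H k Hk; rewrite H. Qed.

Lemma agree_trans N u v w : agree N u v -> agree N v w -> agree N u w.
Proof. by move=> H1 H2 k Hk; rewrite H1 // H2. Qed.

Lemma ucont (f : config -> R) : cont f ->
  forall eps, 0 < eps -> exists N, forall v w, agree N v w -> `|f v - f w| < eps.
Proof.
move=> cf eps he; apply: contrapT; rewrite -forallNE => H.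
have H' : forall N : nat, exists p : config * config, agree N p.1 p.2 /\ eps <= `|f p.1 - f p.2|.
  move=> N; move: (H N); rewrite -existsNE => -[v]; rewrite -existsNE => -[w].
  rewrite not_implyE => -[Ha Hf]; exists (v, w); split => //.
  by rewrite leNgt; apply/negP.
have [g Hg] := choice H'.
have [w Hw] := cluster (fun n => (g n).1).
have [K HK] := cf w (eps / 2) ltac:(lra).
have [n [Hn Ha]] := Hw K K.
have [Hg1 Hg2] := Hg n.
have H1 := HK _ Ha.
have H2 : `|f (g n).2 - f w| < eps / 2.
  apply: HK; apply: agree_trans Ha; apply: agree_sym; exact: agree_mono Hn Hg1.
have : `|f (g n).1 - f (g n).2| < eps.
  have -> : f (g n).1 - f (g n).2 = (f (g n).1 - f w) - (f (g n).2 - f w) by ring.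
  apply: le_lt_trans (ler_normB _ _) _; lra.
by rewrite ltNge Hg2.
Qed.

Lemma bounded (f : config -> R) : cont f -> exists M, forall w, `|f w| <= M.
Proof.
move=> cf; apply: contrapT; rewrite -forallNE => H.
have H' : forall n : nat, exists w, n%:R < `|f w|.
  move=> n; move: (H n%:R); rewrite -existsNE => -[w Hw]; exists w.
  by rewrite ltNge; apply/negP.
have [g Hg] := choice H'.
have [w Hw] := cluster g.
have [K HK] := cf w 1 ltr01.
have Hb := @archi_boundP R (`|f w| + 1) ltac:(have := normr_ge0 (f w); lra).
have [n [Hn Ha]] := Hw K (maxn K (Num.Def.archi_bound (`|f w| + 1))).
have H1 := HK _ Ha.
have H2 := Hg n.
have H3 : (Num.Def.archi_bound (`|f w| + 1))%:R <= n%:R :> R.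
  by rewrite ler_nat; apply: leq_trans Hn; exact: leq_maxr.
have H4 : `|f (g n)| <= `|f (g n) - f w| + `|f w|.
  have {1}-> : f (g n) = (f (g n) - f w) + f w by ring.
  exact: ler_normD.
lra.
Qed.
End A.

Section B.
Variables (E : finType) (R : realType).
Local Notation config := (config E).
Implicit Types (v w : config) (L : {fset int}).

Lemma glue_in L (x : {ffun L -> E}) w (k : L) : glue x w (val k) = x k.
Proof. by rewrite /glue valK. Qed.

Lemma glue_out L (x : {ffun L -> E}) w k : k \notin L -> glue x w k = w k.
Proof. by move=> Hk; rewrite /glue insubN. Qed.

Lemma glue_glue L (x y : {ffun L -> E}) w : glue y (glue x w) = glue y w.
Proof. by apply: funext => k; rewrite /glue; case: insub. Qed.

Definition off L v w := forall k, k \notin L -> v k = w k.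

Lemma off_glue L (x : {ffun L -> E}) w : off L (glue x w) w.
Proof. by move=> k Hk; rewrite glue_out. Qed.

Lemma off_sym L v w : off L v w -> off L w v.
Proof. by move=> H k Hk; rewrite H. Qed.

Lemma off_trans L L' u v w : off L u v -> off L' v w -> off (L `|` L')%fset u w.
Proof.
move=> H1 H2 k; rewrite in_fsetU negb_or => /andP [Hk Hk'].
by rewrite H1 // H2.
Qed.

Lemma off_sub L L' v w : fsubset L L' -> off L v w -> off L' v w.
Proof.
move=> /fsubsetP HL H k Hk; apply: H; apply/negP => Hk2; by move: Hk; rewrite HL.
Qed.

Lemma off0 v w : off fset0 v w -> v = w.
Proof. by move=> H; apply: funext => k; apply: H; rewrite in_fset0. Qed.

Definition local (T : config -> config) :=
  forall M : nat, exists N : nat, forall v w, agree N v w -> agree M (T v) (T w).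

Lemma cont_local (f : config -> R) T : cont f -> local T -> cont (fun w => f (T w)).
Proof.
move=> cf HT w eps he; have [M HM] := cf (T w) eps he.
have [N HN] := HT M; exists N => w' Hw'; apply: HM; exact: HN.
Qed.

Lemma local_id : local id.
Proof. by move=> M; exists M. Qed.

Lemma local_comp T1 T2 : local T1 -> local T2 -> local (fun w => T1 (T2 w)).
Proof.
move=> H1 H2 M; have [N1 HN1] := H1 M; have [N2 HN2] := H2 N1.
exists N2 => v w H; apply: HN1; exact: HN2.
Qed.

Lemma local_shiftn i : local (shiftn i).
Proof.
move=> M; exists (M + `|i|)%N => v w H k Hk; rewrite /shiftn; apply: H; lia.
Qed.

Lemma local_upd j e : local (fun w => upd w j e).
Proof. by move=> M; exists M => v w H k Hk; rewrite /upd; case: ifP => // _; exact: (H k Hk). Qed.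

Lemma local_glue L (x : {ffun L -> E}) : local (glue x).
Proof. by move=> M; exists M => v w H k Hk; rewrite /glue; case: insub => [?|] //; exact: (H k Hk). Qed.

Lemma local_cond_a e : local (cond_a e).
Proof. by move=> M; exists M => v w H k Hk; rewrite /cond_a; case: ifP => // _; exact: (H k Hk). Qed.

Lemma cont_const (c : R) : cont (fun _ : config => c).
Proof. by move=> w eps he; exists 0%N => w' _; rewrite subrr normr0. Qed.

Lemma cont_add (f g : config -> R) : cont f -> cont g -> cont (fun w => f w + g w).
Proof.
move=> cf cg w eps he.
have [N1 H1] := cf w (eps / 2) ltac:(lra).
have [N2 H2] := cg w (eps / 2) ltac:(lra).
exists (maxn N1 N2) => w' Hw'.
have A1 := H1 w' (agree_mono (leq_maxl _ _) Hw').
have A2 := H2 w' (agree_mono (leq_maxr _ _) Hw').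
have -> : f w' + g w' - (f w + g w) = (f w' - f w) + (g w' - g w) by ring.
apply: le_lt_trans (ler_normD _ _) _; lra.
Qed.

Lemma cont_opp (f : config -> R) : cont f -> cont (fun w => - f w).
Proof.
move=> cf w eps he; have [N H] := cf w eps he; exists N => w' Hw'.
by rewrite -opprD normrN; exact: H.
Qed.

Lemma cont_sub (f g : config -> R) : cont f -> cont g -> cont (fun w => f w - g w).
Proof. by move=> cf cg; apply: cont_add => //; exact: cont_opp. Qed.

Lemma cont_sum (I : Type) (s : seq I) (F : I -> config -> R) :
  (forall i, cont (F i)) -> cont (fun w => \sum_(i <- s) F i w).
Proof.
move=> H; elim: s => [|i s IH].
  by under eq_fun do rewrite big_nil; exact: cont_const.
by under eq_fun do rewrite big_cons; exact: cont_add.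
Qed.

Lemma cont_compR (g : config -> R) (h : R -> R) :
  cont g -> (forall w, {for g w, continuous h}) -> cont (fun w => h (g w)).
Proof.
move=> cg ch w eps he.
have := ch w; move/cvgrPdist_lt => /(_ eps he).
move/nbhs_ballP => [d /= d0 Hd].
have [N HN] := cg w d d0.
exists N => w' Hw'. rewrite distrC. apply: Hd. rewrite -ball_normE /= distrC. exact: HN.
Qed.

Lemma limn_eq (u : nat -> R) l :
  (forall eps, 0 < eps -> exists N, forall n, (N <= n)%N -> `|u n - l| < eps) -> limn u = l.
Proof.
move=> H; apply: cvg_lim => //; apply/cvgrPdist_lt => eps he.
have [N HN] := H eps he; exists N => // n /= Hn; rewrite distrC; exact: HN.
Qed.

Lemma psumE (f : int -> R) n : psum f n = \sum_(0 <= i < (2 * n).+1) f (i%:Z - n%:Z).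
Proof. by rewrite /psum big_mkord. Qed.

Lemma psumB (f g : int -> R) n : psum (fun i => f i - g i) n = psum f n - psum g n.
Proof. by rewrite /psum big_split /= sumrN. Qed.

Lemma psumD (f g : int -> R) n : psum (fun i => f i + g i) n = psum f n + psum g n.
Proof. by rewrite /psum big_split. Qed.

Lemma psum0 n : psum (fun _ => 0 : R) n = 0.
Proof. by rewrite /psum big1. Qed.

Lemma psum_ext (f g : int -> R) n : (forall i, f i = g i) -> psum f n = psum g n.
Proof. by move=> H; rewrite /psum; apply: eq_bigr => i _; rewrite H. Qed.

Lemma sum_bound (a b : nat) (F : nat -> R) eps :
  (forall k, (a <= k < b)%N -> `|F k| <= eps) -> `|\sum_(a <= k < b) F k| <= (b - a)%:R * eps.
Proof.
move=> H; apply: le_trans (ler_norm_sum _ _ _) _.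
rewrite mulr_natl -sumr_const_nat; apply: ler_sum_nat => k Hk; exact: H.
Qed.

Lemma psum_shift (h : int -> R) (d M : nat) (eps : R) :
  (forall i : int, M%:Z < `|i| -> `|h i| <= eps) -> forall n, (M + d <= n)%N ->
  `|psum h n - psum (fun i => h (i - d%:Z)) n| <= (2 * d)%:R * eps.
Proof.
move=> Hh n Hn; rewrite !psumE.
set F := fun k : nat => h (k%:Z - n%:Z - d%:Z).
have EA : \sum_(0 <= i < (2 * n).+1) h (i%:Z - n%:Z) = \sum_(d <= k < (2 * n).+1 + d) F k.
  have H := @big_addn _ 0 +%R 0 ((2 * n).+1 + d) d xpredT F.
  rewrite add0n addnK in H; rewrite H; apply: eq_bigr => i _; rewrite /F; congr h; lia.
have EB : \sum_(0 <= i < (2 * n).+1) h (i%:Z - n%:Z - d%:Z) = \sum_(0 <= k < (2 * n).+1) F k by [].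
have S1 : \sum_(0 <= i < (2 * n).+1 + d) F i = \sum_(0 <= i < d) F i + \sum_(d <= i < (2 * n).+1 + d) F i.
  by rewrite -big_cat_nat // leq_addl.
have S2 : \sum_(0 <= i < (2 * n).+1 + d) F i = \sum_(0 <= i < (2 * n).+1) F i + \sum_((2 * n).+1 <= i < (2 * n).+1 + d) F i.
  by rewrite -big_cat_nat // leq_addr.
have -> : \sum_(0 <= i < (2 * n).+1) h (i%:Z - n%:Z) - \sum_(0 <= i < (2 * n).+1) h (i%:Z - n%:Z - d%:Z)
   = \sum_((2 * n).+1 <= k < (2 * n).+1 + d) F k - \sum_(0 <= k < d) F k.
  rewrite EA EB; lra.
apply: le_trans (ler_normB _ _) _.
have B1 : `|\sum_((2 * n).+1 <= k < (2 * n).+1 + d) F k| <= d%:R * eps.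
  have := @sum_bound (2 * n).+1 ((2 * n).+1 + d) F eps.
  rewrite addKn; apply => k /andP [Hk1 Hk2]; apply: Hh; lia.
have B2 : `|\sum_(0 <= k < d) F k| <= d%:R * eps.
  have := @sum_bound 0 d F eps.
  rewrite subn0; apply => k /andP [Hk1 Hk2]; apply: Hh; lia.
have -> : (2 * d)%:R * eps = d%:R * eps + d%:R * eps by rewrite natrM; ring.
exact: lerD.
Qed.

End B.

Section C.
Variables (E : finType) (R : realType).
Local Notation config := (config E).
Variable phi : config -> R.
Hypothesis hc : cont phi.
Hypothesis hx : ext_prop phi.

Definition Dif (xi eta : config) (i : int) : R := phi (shiftn i xi) - phi (shiftn i eta).

Lemma psum_bound (f : int -> R) c n : (forall i, `|f i| <= c) -> `|psum f n| <= ((2 * n).+1)%:R * c.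
Proof.
move=> H; rewrite psumE.
have := @sum_bound R 0 (2 * n).+1 (fun i : nat => f (i%:Z - n%:Z)) c.
by rewrite subn0; apply => k _; exact: H.
Qed.

Lemma abs_helper (M d : nat) (i : int) : (M + d)%N%:Z < `|i| -> M%:Z < `|i + d%:Z|.
Proof. move=> H; lia. Qed.

Lemma psum_shiftZ (h : int -> R) (j : int) (M : nat) (eps : R) :
  (forall i : int, M%:Z < `|i| -> `|h i| <= eps) -> forall n : nat, ((M + 2 * `|j|) <= n)%N ->
  `|psum h n - psum (fun i => h (i - j)) n| <= (2 * `|j|)%:R * eps.
Proof.
move=> Hh n Hn; case: j Hn => d Hn.
- apply: (psum_shift Hh); lia.
- rewrite NegzE.
  pose h' := fun i : int => h (i + d.+1%:Z).
  have Hh' : forall i : int, (M + d.+1)%N%:Z < `|i| -> `|h' i| <= eps.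
    move=> i Hi; apply: Hh; exact: abs_helper.
  have Hn' : (M + d.+1 + d.+1 <= n)%N by move: Hn; rewrite NegzE abszN /=; lia.
  have := psum_shift Hh' Hn'.
  have -> : psum h' n = psum (fun i => h (i - - d.+1%:Z)) n.
    by apply: psum_ext => i; rewrite /h' opprK.
  have -> : psum (fun i => h' (i - d.+1%:Z)) n = psum h n.
    by apply: psum_ext => i; rewrite /h' subrK.
  by rewrite distrC.
Qed.

Lemma shiftn_upd i j (v : config) e :
  shiftn i (upd v j e) = shiftn (i - j) (upd (shiftn j v) 0 e).
Proof.
apply: funext => k; rewrite /shiftn /upd addrA subr_eq0 subrK //.
Qed.

Lemma SS j a b : exists Lim : config -> R, (exists B, forall w, `|Lim w| <= B) /\
  forall eps, 0 < eps -> exists N, forall n, (N <= n)%N -> forall v,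
    `|psum (Dif (upd v j a) (upd v j b)) n - Lim (shiftn j v)| < eps.
Proof.
have [Lim HL] := hx a b.
have [Mp HMp] := bounded hc.
exists Lim; split.
  have [N HN] := HL 1 ltr01.
  exists (((2 * N).+1)%:R * (Mp + Mp) + 1) => w.
  have H1 := HN N (leqnn N) w.
  have H2 : `|psum (fun i => phi (shiftn i (upd w 0 a)) - phi (shiftn i (upd w 0 b))) N|
      <= ((2 * N).+1)%:R * (Mp + Mp).
    apply: psum_bound => i; apply: le_trans (ler_normB _ _) _; exact: lerD.
  set P := psum _ N in H1 H2.
  have : `|Lim w| <= `|P - Lim w| + `|P|.
    have {1}-> : Lim w = - (P - Lim w) + P by ring.
    by apply: le_trans (ler_normD _ _) _; rewrite normrN.
  lra.
move=> eps he.
set c := (eps / 2) / (2 * `|j|%N + 1)%:R.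
have hc0 : 0 < c by rewrite /c divr_gt0 // ?ltr0n ?addn1 //; lra.
have [N0 HN0] := ucont hc hc0.
have [N1 HN1] := HL (eps / 2) ltac:(lra).
exists (maxn N1 (N0 + 2 * `|j|)) => n Hn v.
set g := fun m => phi (shiftn m (upd (shiftn j v) 0 a)) - phi (shiftn m (upd (shiftn j v) 0 b)).
have Hg : forall m : int, N0%:Z < `|m| -> `|g m| <= c.
  move=> m Hm; apply: ltW; apply: HN0 => k Hk.
  rewrite /shiftn /upd; have -> : (k + m == 0) = false by apply/eqP; lia.
  by [].
have S := psum_shiftZ Hg (j := j) (n := n) ltac:(have := leq_maxr N1 (N0 + 2 * `|j|); lia).
have E1 : psum (Dif (upd v j a) (upd v j b)) n = psum (fun i => g (i - j)) n.
  by apply: psum_ext => i; rewrite /Dif /g (shiftn_upd i j v a) (shiftn_upd i j v b).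
rewrite E1.
have H1 := HN1 n (leq_trans (leq_maxl _ _) Hn) (shiftn j v).
have H3 : (2 * `|j|%N)%:R * c <= eps / 2.
  have Hk : (2 * `|j|%N)%:R <= (2 * `|j|%N + 1)%:R :> R by rewrite ler_nat addn1.
  have -> : eps / 2 = (2 * `|j|%N + 1)%:R * c by rewrite /c [RHS]mulrC divfK // pnatr_eq0 addn1.
  by apply: ler_wpM2r => //; exact: ltW.
have -> : psum (fun i => g (i - j)) n - Lim (shiftn j v)
  = (psum (fun i => g (i - j)) n - psum g n) + (psum g n - Lim (shiftn j v)) by ring.
apply: le_lt_trans (ler_normD _ _) _.
rewrite distrC in S.
have : `|psum g n - Lim (shiftn j v)| < eps / 2 by [].
lra.
Qed.


Lemma SSall (j : int) : exists Lim : E -> E -> config -> R,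
  (exists B, forall a b w, `|Lim a b w| <= B) /\
  forall eps, 0 < eps -> exists N, forall n, (N <= n)%N -> forall a b v,
    `|psum (Dif (upd v j a) (upd v j b)) n - Lim a b (shiftn j v)| < eps.
Proof.
have H : forall p : E * E, exists Lim : config -> R, (exists B, forall w, `|Lim w| <= B) /\
  forall eps, 0 < eps -> exists N, forall n, (N <= n)%N -> forall v,
    `|psum (Dif (upd v j p.1) (upd v j p.2)) n - Lim (shiftn j v)| < eps.
  by move=> p; exact: SS.
have [F HF] := choice H.
exists (fun a b => F (a, b)); split.
  have HB : forall p, exists B, forall w, `|F p w| <= B by move=> p; exact: (HF p).1.
  have [Bf HBf] := choice HB.
  exists (\sum_p `|Bf p|) => a b w.
  apply: le_trans (HBf (a, b) w) _; apply: le_trans (ler_norm _) _.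
  rewrite (bigD1 (a, b)) //= lerDl; exact: sumr_ge0.
move=> eps he.
have HN : forall p, exists N, forall n, (N <= n)%N -> forall v,
    `|psum (Dif (upd v j p.1) (upd v j p.2)) n - F p (shiftn j v)| < eps.
  by move=> p; exact: (HF p).2 eps he.
have [Nf HNf] := choice HN.
exists (\max_p Nf p) => n Hn a b v.
by apply: (HNf (a, b)); exact: leq_trans (leq_bigmax (a, b)) Hn.
Qed.

Lemma psum_self xi n : psum (Dif xi xi) n = 0.
Proof. by rewrite -(psum0 R n); apply: psum_ext => i; rewrite /Dif subrr. Qed.

Lemma rho_self xi : rho phi xi xi = 0.
Proof.
apply: limn_eq => eps he; exists 0%N => n _.
by have := psum_self xi n; rewrite /Dif => ->; rewrite subrr normr0.
Qed.

Definition CLprop (L : {fset int}) := exists B, (forall xi eta : config, off L xi eta -> `|rho phi xi eta| <= B) /\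
  forall eps, 0 < eps -> exists N, forall n, (N <= n)%N -> forall xi eta : config, off L xi eta ->
    `|psum (Dif xi eta) n - rho phi xi eta| < eps.

Lemma CL_n (m : nat) : forall L : {fset int}, #|`L| = m -> CLprop L.
Proof.
elim: m => [|m IH] L HL.
  have -> : L = fset0 by apply/eqP; rewrite -cardfs_eq0 HL.
  exists 0; split.
    by move=> xi eta /off0 ->; rewrite rho_self normr0.
  move=> eps he; exists 0%N => n _ xi eta /off0 ->.
  by rewrite psum_self rho_self subrr normr0.
have : L != fset0 by rewrite -cardfs_eq0 HL.
move=> /fset0Pn [j Hj].
set L' := (L `\ j)%fset.
have HL' : #|`L'| = m by move: HL; rewrite (cardfsD1 j) Hj /= add1n => -[].
have [B' [HB' HC']] := IH L' HL'.
have [Lim [[BS HBS] HS]] := SSall j.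
have Hz : forall xi eta : config, off L xi eta -> [/\ off L' (upd xi j (eta j)) eta,
    upd (upd xi j (eta j)) j (xi j) = xi & upd (upd xi j (eta j)) j (eta j) = upd xi j (eta j)].
  move=> xi eta H; split.
  - move=> k; rewrite in_fsetD1 negb_and negbK /upd => /orP [/eqP ->|Hk].
      by rewrite eqxx.
    by case: eqP => [->//|_]; exact: (H k Hk).
  - by apply: funext => k; rewrite /upd; case: ifP => [/eqP -> //|Hk]; rewrite Hk.
  - by apply: funext => k; rewrite /upd; case: ifP => // ->.
have Hsplit : forall n (xi eta : config), off L xi eta -> psum (Dif xi eta) n =
    psum (Dif (upd (upd xi j (eta j)) j (xi j)) (upd (upd xi j (eta j)) j (eta j))) n
    + psum (Dif (upd xi j (eta j)) eta) n.
  move=> n xi eta H; have [_ -> ->] := Hz xi eta H.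
  by rewrite -psumD; apply: psum_ext => i; rewrite /Dif; ring.
have key : forall eps, 0 < eps -> exists N, forall n, (N <= n)%N -> forall xi eta : config, off L xi eta ->
    `|psum (Dif xi eta) n - (Lim (xi j) (eta j) (shiftn j (upd xi j (eta j)))
        + rho phi (upd xi j (eta j)) eta)| < eps.
  move=> eps he.
  have [N1 HN1] := HS (eps / 2) ltac:(lra).
  have [N2 HN2] := HC' (eps / 2) ltac:(lra).
  exists (maxn N1 N2) => n Hn xi eta H.
  have [H1 _ _] := Hz xi eta H.
  have A1 := HN1 n (leq_trans (leq_maxl _ _) Hn) (xi j) (eta j) (upd xi j (eta j)).
  have A2 := HN2 n (leq_trans (leq_maxr _ _) Hn) _ _ H1.
  rewrite (Hsplit n xi eta H).
  set P1 := psum _ n in A1 *; set P2 := psum _ n in A2 *.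
  set l1 := Lim _ _ _ in A1 *; set l2 := rho phi _ _ in A2 *.
  have -> : P1 + P2 - (l1 + l2) = (P1 - l1) + (P2 - l2) by ring.
  apply: le_lt_trans (ler_normD _ _) _; lra.
have Hrho : forall xi eta : config, off L xi eta -> rho phi xi eta =
    Lim (xi j) (eta j) (shiftn j (upd xi j (eta j))) + rho phi (upd xi j (eta j)) eta.
  move=> xi eta H; apply: limn_eq => eps he.
  have [N HN] := key eps he; exists N => n Hn; exact: HN.
exists (BS + B'); split.
  move=> xi eta H; rewrite Hrho //.
  have [H1 _ _] := Hz xi eta H.
  apply: le_trans (ler_normD _ _) _; apply: lerD; [exact: HBS | exact: HB'].
move=> eps he; have [N HN] := key eps he; exists N => n Hn xi eta H.
rewrite Hrho //; exact: HN.
Qed.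

Lemma CL L : CLprop L.
Proof. exact: (CL_n (erefl _)). Qed.

End C.

Section D.
Variables (E : finType) (R : realType).
Local Notation config := (config E).
Variable phi : config -> R.
Hypothesis hc : cont phi.
Hypothesis hx : ext_prop phi.
Local Notation rh := (rho phi).
Local Notation Dif := (Dif phi).

Lemma rho_conv L (xi eta : config) : off L xi eta ->
  forall eps, 0 < eps -> exists N, forall n, (N <= n)%N -> `|psum (Dif xi eta) n - rh xi eta| < eps.
Proof.
move=> H eps he; have [B [_ HC]] := CL hc hx L.
have [N HN] := HC eps he; exists N => n Hn; exact: HN.
Qed.

Lemma rho_cocycle L1 L2 (u v w : config) : off L1 u v -> off L2 v w -> rh u w = rh u v + rh v w.
Proof.
move=> H1 H2; apply: limn_eq => eps he.
have [N1 HN1] := rho_conv H1 (eps := eps / 2) ltac:(lra).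
have [N2 HN2] := rho_conv H2 (eps := eps / 2) ltac:(lra).
exists (maxn N1 N2) => n Hn.
have A1 := HN1 n (leq_trans (leq_maxl _ _) Hn).
have A2 := HN2 n (leq_trans (leq_maxr _ _) Hn).
have -> : psum (fun i => phi (shiftn i u) - phi (shiftn i w)) n = psum (Dif u v) n + psum (Dif v w) n.
  by rewrite -psumD; apply: psum_ext => i; rewrite /Dif; ring.
set P1 := psum _ n in A1 *; set P2 := psum _ n in A2 *.
have -> : P1 + P2 - (rh u v + rh v w) = (P1 - rh u v) + (P2 - rh v w) by ring.
apply: le_lt_trans (ler_normD _ _) _; lra.
Qed.

Lemma fset_bound (L : {fset int}) : exists K : nat, forall k, k \in L -> `|k| <= K%:Z.
Proof.
exists (\max_(k <- L) `|k|%N) => k Hk.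
set K := (\max_(k <- L) `|k|%N)%N.
have H : (`|k| <= K)%N by exact: leq_bigmax_seq.
lia.
Qed.

Lemma D_small L eps : 0 < eps -> exists M : nat, forall xi eta : config, off L xi eta ->
  forall i : int, M%:Z < `|i| -> `|Dif xi eta i| < eps.
Proof.
move=> he; have [N0 HN0] := ucont hc he.
have [K HK] := fset_bound L.
exists (N0 + K)%N => xi eta H i Hi; apply: HN0 => k Hk.
rewrite /shiftn; apply: H; apply/negP => /HK Hb; lia.
Qed.

Lemma abs_helper1 (M : nat) (i : int) : (M + 1)%N%:Z < `|i| -> M%:Z < `|i + 1|.
Proof. move=> H; lia. Qed.

Lemma shiftn_shift i (xi : config) : shiftn i (shift xi) = shiftn (i + 1) xi.
Proof. by apply: funext => k; rewrite /shiftn /shift /shiftn addrA. Qed.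

Lemma rho_shift L (xi eta : config) : off L xi eta -> rh (shift xi) (shift eta) = rh xi eta.
Proof.
move=> H; apply: limn_eq => eps he.
have [N HN] := rho_conv H (eps := eps / 2) ltac:(lra).
have [M HM] := D_small L (eps := eps / 4) ltac:(lra).
pose h := fun i : int => Dif xi eta (i + 1).
have Hh : forall i : int, (M + 1)%N%:Z < `|i| -> `|h i| <= eps / 4.
  move=> i Hi; apply: ltW; apply: HM => //; exact: abs_helper1.
exists (maxn N (M + 1 + 1)) => n Hn.
have S := psum_shift Hh (n := n) (leq_trans (leq_maxr _ _) Hn).
have E1 : psum (fun i => phi (shiftn i (shift xi)) - phi (shiftn i (shift eta))) n = psum h n.
  by apply: psum_ext => i; rewrite /h /Dif !shiftn_shift.
have E2 : psum (fun i => h (i - 1%:Z)) n = psum (Dif xi eta) n.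
  by apply: psum_ext => i; rewrite /h subrK.
rewrite E1; rewrite E2 in S.
have A := HN n (leq_trans (leq_maxl _ _) Hn).
have -> : psum h n - rh xi eta = (psum h n - psum (Dif xi eta) n) + (psum (Dif xi eta) n - rh xi eta) by ring.
apply: le_lt_trans (ler_normD _ _) _.
rewrite muln1 in S; lra.
Qed.

Lemma sum_exp_pos (I : finType) (F : I -> R) (i0 : I) : 0 < \sum_(i : I) expR (F i).
Proof.
apply: (lt_le_trans (expR_gt0 (F i0))).
rewrite (bigD1 i0) //= lerDl; apply: sumr_ge0 => i _; exact: expR_ge0.
Qed.

Definition restr (L : {fset int}) (w : config) : {ffun L -> E} := [ffun k : L => w (val k)].

Lemma gam_formula (L L0 : {fset int}) (v w : config) : off L0 v w ->
  gammaphi phi L v = expR (rh v w) / \sum_(z : {ffun L -> E}) expR (rh (glue z v) w).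
Proof.
move=> H; rewrite /gammaphi.
have E1 : forall z : {ffun L -> E}, expR (rh (glue z v) v) = expR (rh (glue z v) w) * expR (- rh v w).
  move=> z; rewrite -expRD; congr expR.
  rewrite (rho_cocycle (off_glue z v) H); ring.
under eq_bigr do rewrite E1.
rewrite -mulr_suml invfM expRN invrK mulrC //.
Qed.

Definition Zs (L : {fset int}) (u w : config) := \sum_(z : {ffun L -> E}) expR (rh (glue z u) w).

Lemma gam_formula_glue (L : {fset int}) (x : {ffun L -> E}) (w : config) :
  gammaphi phi L (glue x w) = expR (rh (glue x w) w) / Zs L w w.
Proof.
rewrite (gam_formula L (off_glue x w)) /Zs; congr (_ / _).
by apply: eq_bigr => z _; rewrite glue_glue.
Qed.

Lemma Zs_pos (L : {fset int}) (u w : config) : 0 < Zs L u w.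
Proof. exact: (sum_exp_pos _ (restr L w)). Qed.

Lemma gam_norm (L : {fset int}) (w : config) : \sum_(x : {ffun L -> E}) gammaphi phi L (glue x w) = 1.
Proof.
under eq_bigr do rewrite gam_formula_glue.
rewrite -mulr_suml divff //; exact: lt0r_neq0 (Zs_pos L w w).
Qed.

End D.

Section Ecomp.
Variables (E : finType) (R : realType).
Local Notation config := (config E).

Lemma glue_ffun (L : {fset int}) (u w : config) : off L u w -> glue [ffun k : L => u (val k)] w = u.
Proof.
move=> H; apply: funext => k; rewrite /glue; case: insubP => [k' _ <-|Hk].
  by rewrite ffunE.
by rewrite H.
Qed.

Lemma ffun_glue (L : {fset int}) (x : {ffun L -> E}) (w : config) : [ffun k : L => glue x w (val k)] = x.
Proof. by apply/ffunP => k; rewrite ffunE glue_in. Qed.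

Definition sig (L D : {fset int}) (w : config) (p : {ffun L -> E} * {ffun D -> E}) :
  {ffun L -> E} * {ffun D -> E} :=
  ([ffun k : L => glue (L:=D) p.2 (glue (L:=L) p.1 w) (val k)], [ffun k : D => glue (L:=L) p.1 w (val k)]).

Lemma sig1 (L D : {fset int}) (w : config) (p : {ffun L -> E} * {ffun D -> E}) : fsubset D L -> glue (sig w p).1 w = glue p.2 (glue p.1 w).
Proof.
move=> HDL; rewrite /sig /=; apply: glue_ffun.
apply: (off_sub _ (off_trans (off_glue p.2 (glue p.1 w)) (off_glue p.1 w))).
by rewrite fsubUset HDL fsubset_refl.
Qed.

Lemma sig2 (L D : {fset int}) (w : config) (p : {ffun L -> E} * {ffun D -> E}) : fsubset D L ->
  glue (sig w p).2 (glue (sig w p).1 w) = glue p.1 w.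
Proof.
move=> HDL; rewrite sig1 // glue_glue /sig /=; apply: glue_ffun => k _ //.
Qed.

Lemma sig_invol (L D : {fset int}) (w : config) : fsubset D L -> involutive (@sig L D w).
Proof.
move=> HDL [x y]; rewrite {1}/sig; congr pair.
- by rewrite (sig2 w (x, y) HDL) /= ffun_glue.
- by rewrite (sig1 w (x, y) HDL) /= ffun_glue.
Qed.

End Ecomp.

Section E2.
Variables (E : finType) (R : realType).
Local Notation config := (config E).
Variable phi : config -> R.
Hypothesis hc : cont phi.
Hypothesis hx : ext_prop phi.
Local Notation rh := (rho phi).

Lemma gam_cons (L D : {fset int}) (HDL : fsubset D L) (f : config -> R) (w : config) :
  \sum_(x : {ffun L -> E}) gammaphi phi L (glue x w) * cond_exp (gammaphi phi) D f (glue x w)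
  = cond_exp (gammaphi phi) L f w.
Proof.
pose r v := rh v w.
pose Z := Zs phi L w w.
pose Nf u := Zs phi D u w.
have HZ : Z != 0 by exact: lt0r_neq0 (Zs_pos phi L w w).
have HN : forall u : config, Nf u != 0 by move=> u; exact: lt0r_neq0 (Zs_pos phi D u w).
have G1 : forall x : {ffun L -> E}, gammaphi phi L (glue x w) = expR (r (glue x w)) / Z.
  by move=> x; rewrite (gam_formula_glue hc hx).
have G2 : forall (x : {ffun L -> E}) (y : {ffun D -> E}),
    gammaphi phi D (glue y (glue x w)) = expR (r (glue y (glue x w))) / Nf (glue x w).
  move=> x y; rewrite (gam_formula hc hx D (off_trans (off_glue y (glue x w)) (off_glue x w))).
  congr (_ / _); apply: eq_bigr => z _; by rewrite glue_glue.
pose T (x : {ffun L -> E}) (y : {ffun D -> E}) := expR (r (glue x w)) / Z *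
   (expR (r (glue y (glue x w))) / Nf (glue x w) * f (glue y (glue x w))).
pose T' (x : {ffun L -> E}) (y : {ffun D -> E}) := expR (r (glue y (glue x w))) / Z *
   (expR (r (glue x w)) / Nf (glue x w) * f (glue x w)).
have E1 : \sum_(x : {ffun L -> E}) gammaphi phi L (glue x w) * cond_exp (gammaphi phi) D f (glue x w)
    = \sum_(p : {ffun L -> E} * {ffun D -> E}) T p.1 p.2.
  rewrite -(pair_bigA _ T); apply: eq_bigr => x _; rewrite /cond_exp mulr_sumr.
  by apply: eq_bigr => y _; rewrite G1 G2.
have E2 : \sum_(p : {ffun L -> E} * {ffun D -> E}) T p.1 p.2 = \sum_(p : {ffun L -> E} * {ffun D -> E}) T' p.1 p.2.
  rewrite (reindex_inj (inv_inj (sig_invol w HDL))); apply: eq_bigr => p _.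
  rewrite /T /T' (sig2 w p HDL) (sig1 w p HDL).
  have -> : Nf (glue p.2 (glue p.1 w)) = Nf (glue p.1 w).
    by rewrite /Nf /Zs; apply: eq_bigr => z _; rewrite glue_glue.
  by [].
rewrite E1 E2 -(pair_bigA _ T') /cond_exp; apply: eq_bigr => x _.
rewrite /T' -mulr_suml -mulr_suml G1.
have -> : \sum_(i : {ffun D -> E}) expR (r (glue i (glue x w))) = Nf (glue x w) by [].
by field; rewrite HZ HN.
Qed.

Lemma gam_spec : is_specification (gammaphi phi).
Proof.
split.
- move=> L w; rewrite /gammaphi invr_ge0; apply: sumr_ge0 => i _; exact: expR_ge0.
- move=> L w; exact: (gam_norm hc hx).
- move=> L D HDL f w; exact: gam_cons.
Qed.

Lemma gam_nonnull : non_null (gammaphi phi).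
Proof.
move=> L; have [B [HB _]] := CL hc hx L.
set c := #|{ffun L -> E}|%:R * expR B + 1.
have hc0 : 0 < c by rewrite /c; have := expR_ge0 B; have := ler0n R #|{ffun L -> E}|; nra.
exists c^-1; split; first by rewrite invr_gt0.
move=> w; rewrite /gammaphi.
have Hp := Zs_pos phi L w w; rewrite /Zs in Hp.
rewrite lef_pV2 ?posrE //.
apply: le_trans (_ : _ <= #|{ffun L -> E}|%:R * expR B) _; last by rewrite /c lerDl.
apply: le_trans (_ : _ <= \sum_(z : {ffun L -> E}) expR B) _; last first.
  by rewrite sumr_const mulr_natl.
apply: ler_sum => z _.
rewrite ler_expR; apply: le_trans (ler_norm _) _; apply: HB; exact: off_glue.
Qed.

Lemma cont_ulim (F : nat -> config -> R) (g : config -> R) : (forall n, cont (F n)) ->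
  (forall eps, 0 < eps -> exists n, forall w, `|F n w - g w| < eps) -> cont g.
Proof.
move=> cF H w eps he.
have [n Hn] := H (eps / 3) ltac:(lra).
have [N HN] := cF n w (eps / 3) ltac:(lra).
exists N => w' Hw'.
have A1 := Hn w; have A2 := Hn w'; have A3 := HN w' Hw'.
have -> : g w' - g w = - (F n w' - g w') + (F n w' - F n w) + (F n w - g w) by ring.
apply: le_lt_trans (ler_normD _ _) _; rewrite -(normrN (F n w' - g w')) in A2.
have := ler_normD (- (F n w' - g w')) (F n w' - F n w).
lra.
Qed.

Lemma cont_psum_glue (L : {fset int}) (z : {ffun L -> E}) n : cont (fun w => psum (Dif phi (glue z w) w) n).
Proof.
rewrite /psum; apply: cont_sum => i; apply: cont_sub.
- exact: (cont_local hc (local_comp (local_shiftn E _) (local_glue z))).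
- exact: (cont_local hc (local_shiftn E _)).
Qed.

Lemma cont_rho_glue (L : {fset int}) (z : {ffun L -> E}) : cont (fun w => rh (glue z w) w).
Proof.
apply: (cont_ulim (F := fun n w => psum (Dif phi (glue z w) w) n)).
  by move=> n; exact: cont_psum_glue.
move=> eps he; have [_ [_ HC]] := CL hc hx L.
have [N HN] := HC eps he; exists N => w; apply: HN => //; exact: off_glue.
Qed.

Lemma gam_cont : spec_continuous (gammaphi phi).
Proof.
move=> L; rewrite /gammaphi.
apply: (cont_compR (g := fun w => \sum_(z : {ffun L -> E}) expR (rh (glue z w) w)) (h := GRing.inv)).
  apply: cont_sum => z; apply: (cont_compR (h := expR)); first exact: cont_rho_glue.
  by move=> w; exact: continuous_expR.
move=> w; apply: (continuousV (s := id)); last exact: cvg_id.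
exact: lt0r_neq0 (Zs_pos phi L w w).
Qed.

End E2.

Section F.
Variables (E : finType) (R : realType).
Local Notation config := (config E).

Lemma glue_inP (L : {fset int}) (x : {ffun L -> E}) (w : config) k (Hk : k \in L) :
  glue x w k = x [` Hk]%fset.
Proof. by rewrite /glue insubT. Qed.

Lemma mem_L1 (L : {fset int}) (k : int) : (k \in [fset (k + 1)%R | k in L]%fset) = (k - 1 \in L).
Proof.
apply/imfsetP/idP => [[x Hx ->]|Hk]; first by rewrite addrK.
by exists (k - 1) => //; rewrite subrK.
Qed.

Variable phi : config -> R.
Hypothesis hc : cont phi.
Hypothesis hx : ext_prop phi.

Lemma gam_TI : translation_invariant (gammaphi phi).
Proof.
move=> L w; set L1 := [fset (k + 1)%R | k in L]%fset.
pose f1 := fun x' : {ffun L -> E} => [ffun k : L1 => glue x' (shift w) (val k - 1)].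
pose f2 := fun y : {ffun L1 -> E} => [ffun k : L => glue y w (val k + 1)].
have c12 : cancel f1 f2.
  move=> x'; apply/ffunP => k; rewrite !ffunE.
  have Hk1 : val k + 1 \in L1 by rewrite mem_L1 addrK (valP k).
  by rewrite (glue_inP _ _ Hk1) ffunE /= addrK glue_in.
have c21 : cancel f2 f1.
  move=> y; apply/ffunP => k; rewrite !ffunE.
  have Hk1 : val k - 1 \in L by rewrite -mem_L1 (valP k).
  by rewrite (glue_inP _ _ Hk1) ffunE /= subrK glue_in.
have Hsh : forall x' : {ffun L -> E}, shift (glue (f1 x') w) = glue x' (shift w).
  move=> x'; apply: funext => k; rewrite /shift /shiftn.
  case Hk: (k \in L).
  - have Hk1 : k + 1 \in L1 by rewrite mem_L1 addrK.
    by rewrite (glue_inP _ _ Hk1) ffunE /= addrK.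
  - have Hk1 : k + 1 \notin L1 by rewrite mem_L1 addrK Hk.
    by rewrite !glue_out ?Hk.
rewrite /gammaphi; congr (_^-1).
rewrite (reindex f1); last by apply: onW_bij; exact: (Bijective c12 c21).
apply: eq_bigr => x' _; congr expR.
by rewrite -Hsh (rho_shift hc hx (off_glue (f1 x') w)).
Qed.

Lemma part_i : TI_gibbsian (gammaphi phi).
Proof.
split; first split.
- exact: gam_spec.
- exact: gam_nonnull.
- exact: gam_cont.
- exact: gam_TI.
Qed.

End F.

Section G.
Variables (E : finType) (R : realType).
Local Notation config := (config E).
Variable gam : {fset int} -> config -> R.
Hypothesis hs : is_specification gam.
Hypothesis hn : non_null gam.

Lemma gam_pos L w : 0 < gam L w.
Proof. have [c [c0 Hc]] := hn L; exact: lt_le_trans c0 (Hc w). Qed.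

Definition ind (xi : config) : config -> R := fun v => if `[< v = xi >] then 1 else 0.

Lemma off_refl L (u : config) : off L u u.
Proof. by []. Qed.

Lemma cond_ind (D : {fset int}) (u xi : config) :
  cond_exp gam D (ind xi) u = if `[< off D u xi >] then gam D xi else 0.
Proof.
rewrite /cond_exp; case: asboolP => H.
- have Hg : glue (restr D xi) u = xi by apply: glue_ffun; exact: off_sym.
  rewrite (bigD1 (restr D xi)) //= Hg /ind asboolT // mulr1 big1 ?addr0 // => x Hx.
  rewrite asboolF ?mulr0 // => Heq; move/negP: Hx; apply.
  by rewrite -Heq /restr ffun_glue.
- rewrite big1 // => x _; rewrite /ind asboolF ?mulr0 // => Heq; apply: H.
  by rewrite -Heq; apply: off_sym; exact: off_glue.
Qed.

Definition Sg (L D : {fset int}) (xi : config) :=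
  \sum_(x : {ffun L -> E}) gam L (glue x xi) * (if `[< off D (glue x xi) xi >] then 1 else 0).

Lemma RL_key (L D : {fset int}) (HDL : fsubset D L) (xi u : config) :
  off D u xi -> gam L u = gam D u * Sg L D xi.
Proof.
move=> H; have [_ _ hcons] := hs.
have := hcons L D HDL (ind u) u.
rewrite cond_ind asboolT // => <-.
have Eg : forall x : {ffun L -> E}, glue x u = glue x xi.
  move=> x; apply: funext => k; rewrite /glue; case: insubP => [k' _ _ //|Hk].
  apply: H; apply/negP => HkD; move/negP: Hk; apply; exact: (fsubsetP HDL).
rewrite /Sg mulr_sumr; apply: eq_bigr => x _; rewrite cond_ind Eg.
have -> : `[< off D (glue x xi) u >] = `[< off D (glue x xi) xi >].
  apply/asboolP/asboolP => H1 k Hk; rewrite H1 //; [exact: H | by rewrite H].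
by case: asboolP => _; rewrite ?mulr1 ?mulr0 // mulrC.
Qed.

Lemma RL (L D : {fset int}) (HDL : fsubset D L) (xi xi' : config) :
  off D xi xi' -> ln (gam L xi) - ln (gam L xi') = ln (gam D xi) - ln (gam D xi').
Proof.
move=> H.
have K1 := RL_key HDL (off_refl (L := D) xi).
have K2 := RL_key HDL (off_sym H).
have HS : 0 < Sg L D xi.
  by have := gam_pos L xi; rewrite K1 pmulr_rgt0 // gam_pos.
rewrite K1 K2 !lnM ?posrE ?gam_pos //; ring.
Qed.

End G.

Section H.
Variables (E : finType) (R : realType).
Local Notation config := (config E).
Variable gam : {fset int} -> config -> R.
Hypothesis hs : is_specification gam.
Hypothesis hn : non_null gam.
Hypothesis hcont : spec_continuous gam.
Hypothesis hti : translation_invariant gam.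
Variable a : E.
Local Notation phg := (phi_gamma gam a).

Lemma shiftn0 (w : config) : shiftn 0 w = w.
Proof. by apply: funext => k; rewrite /shiftn addr0. Qed.

Lemma shiftnD i j (w : config) : shiftn i (shiftn j w) = shiftn (i + j) w.
Proof. by apply: funext => k; rewrite /shiftn addrA. Qed.

Lemma fset1_shift (i : int) : [fset (k + 1)%R | k in [fset i]%fset]%fset = [fset (i + 1)%R]%fset.
Proof. by apply/fsetP => k; rewrite mem_L1 !in_fset1 subr_eq. Qed.

Lemma TI1 (i : int) (w : config) : gam [fset (i + 1)%R]%fset w = gam [fset i]%fset (shift w).
Proof. by rewrite -fset1_shift hti. Qed.

Lemma TIn (n : nat) : forall w : config, gam [fset n%:Z]%fset w = gam [fset 0]%fset (shiftn n w) /\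
  gam [fset (- n%:Z)%R]%fset w = gam [fset 0]%fset (shiftn (- n%:Z) w).
Proof.
elim: n => [|n IH] w.
  by rewrite oppr0 shiftn0.
split.
  have -> : n.+1%:Z = n%:Z + 1 by rewrite -addn1 PoszD.
  by rewrite TI1 (IH _).1 shiftn_shift.
have := TI1 (- n.+1%:Z) (shiftn (-1) w).
have -> : - n.+1%:Z + 1 = - n%:Z by lia.
have -> : shift (shiftn (-1) w) = w by rewrite /shift shiftnD shiftn0.
move=> <-; rewrite (IH _).2 shiftnD; congr (gam _ (shiftn _ w)); lia.
Qed.

Lemma TIi (i : int) (w : config) : gam [fset i]%fset w = gam [fset 0]%fset (shiftn i w).
Proof. by case: i => n; [exact: (TIn n w).1 | rewrite NegzE; exact: (TIn n.+1 w).2]. Qed.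

Definition cut (i : int) (w : config) : config := fun k => if k < i then a else w k.

Lemma cond_shift i (w : config) : cond_a a (shiftn i w) = shiftn i (cut i w).
Proof.
apply: funext => k; rewrite /cond_a /shiftn /cut.
by have -> : (k + i < i) = (k < 0) by apply/idP/idP => H; lia.
Qed.

Lemma upd_cond_shift i (w : config) : upd (cond_a a (shiftn i w)) 0 a = shiftn i (cut (i + 1) w).
Proof.
apply: funext => k; rewrite /upd /cond_a /shiftn /cut.
case: ifP => H1; first by have -> : (k + i < i + 1) = true by lia.
case: ifP => H2; first by have -> : (k + i < i + 1) = true by lia.
by have -> : (k + i < i + 1) = false by lia.
Qed.

Lemma phi_shift i (w : config) :
  phg (shiftn i w) = ln (gam [fset i]%fset (cut i w)) - ln (gam [fset i]%fset (cut (i + 1) w)).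
Proof.
rewrite /phi_gamma upd_cond_shift cond_shift -!TIi ln_div ?posrE ?(gam_pos hn) //.
Qed.

Lemma off_cut i (w : config) : off [fset i]%fset (cut i w) (cut (i + 1) w).
Proof.
move=> k; rewrite in_fset1 /cut => Hk.
case: ifP => H1; case: ifP => H2 //; exfalso; lia.
Qed.

Lemma phi_shift_L (L : {fset int}) i (w : config) : i \in L ->
  phg (shiftn i w) = ln (gam L (cut i w)) - ln (gam L (cut (i + 1) w)).
Proof.
move=> Hi; rewrite phi_shift; symmetry; apply: (RL hs hn) => //.
  by rewrite fsub1set.
exact: off_cut.
Qed.

Lemma psum_tele (L : {fset int}) (K : nat) (HK : forall k, k \in L -> `|k| <= K%:Z)
  (n : nat) (Hn : (K <= n)%N) (xi eta : config) (H : off L xi eta) :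
  psum (Dif phg xi eta) n = ln (gam L (cut (- n%:Z) xi)) - ln (gam L (cut (- n%:Z) eta)).
Proof.
set L' := (L `|` [fset (fun i : 'I_(2 * n).+1 => ((i : nat)%:Z - n%:Z)%R) i | i in 'I_(2 * n).+1])%fset.
have HL' : forall i : nat, (i < (2 * n).+1)%N -> i%:Z - n%:Z \in L'.
  move=> i Hi; rewrite in_fsetU; apply/orP; right.
  by apply/imfsetP; exists (Ordinal Hi).
pose u (w : config) (i : nat) := ln (gam L' (cut (i%:Z - n%:Z) w)).
rewrite psumE.
have E1 : \sum_(0 <= i < (2 * n).+1) Dif phg xi eta (i%:Z - n%:Z)
   = \sum_(0 <= i < (2 * n).+1) ((u eta i.+1 - u eta i) - (u xi i.+1 - u xi i)).
  apply: eq_big_nat => i /andP [_ Hi]; rewrite /Dif /u.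
  rewrite (phi_shift_L xi (HL' i Hi)) (phi_shift_L eta (HL' i Hi)).
  have -> : i.+1%:Z - n%:Z = i%:Z - n%:Z + 1 by lia.
  ring.
rewrite E1 sumrB !telescope_sumr //.
have Ec : cut ((2 * n).+1%:Z - n%:Z) xi = cut ((2 * n).+1%:Z - n%:Z) eta.
  apply: funext => k; rewrite /cut; case: ifP => // Hk; apply: H; apply/negP => /HK Hb; lia.
rewrite /u Ec.
have -> : 0%N%:Z - n%:Z = - n%:Z by rewrite sub0r.
have HLL' : fsubset L L' by exact: fsubsetUl.
have Hoff : off L (cut (- n%:Z) xi) (cut (- n%:Z) eta).
  by move=> k Hk; rewrite /cut; case: ifP => // _; exact: H.
have := RL hs hn HLL' Hoff.
lra.
Qed.

Lemma cont_lngam (L : {fset int}) : cont (fun w => ln (gam L w)).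
Proof.
apply: (cont_compR (g := gam L)); first exact: hcont.
move=> w; apply: continuous_ln; exact: (gam_pos hn).
Qed.

Lemma main2 (L : {fset int}) : forall eps, 0 < eps -> exists N, forall n, (N <= n)%N ->
  forall xi eta : config, off L xi eta ->
  `|psum (Dif phg xi eta) n - (ln (gam L xi) - ln (gam L eta))| < eps.
Proof.
move=> eps he.
have [K HK] := fset_bound L.
have [N0 HN0] := ucont (cont_lngam L) (eps := eps / 2) ltac:(lra).
exists (maxn K N0) => n Hn xi eta H.
rewrite (psum_tele HK (leq_trans (leq_maxl _ _) Hn) H).
have Ha : forall w : config, agree N0 (cut (- n%:Z) w) w.
  move=> w k Hk; rewrite /cut; case: ifP => // Hk2; exfalso.
  have := leq_trans (leq_maxr K N0) Hn; lia.
have A1 := HN0 _ _ (Ha xi); have A2 := HN0 _ _ (Ha eta).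
set x1 := ln (gam L (cut _ xi)) in A1 *; set x2 := ln (gam L (cut _ eta)) in A2 *.
have -> : x1 - x2 - (ln (gam L xi) - ln (gam L eta)) = (x1 - ln (gam L xi)) - (x2 - ln (gam L eta)) by ring.
apply: le_lt_trans (ler_normB _ _) _; lra.
Qed.

Lemma phg_cont : cont phg.
Proof.
have -> : phg = fun w => ln (gam [fset 0]%fset (cond_a a w)) - ln (gam [fset 0]%fset (upd (cond_a a w) 0 a)).
  by apply: funext => w; rewrite /phi_gamma ln_div ?posrE ?(gam_pos hn).
apply: cont_sub.
  exact: (cont_local (cont_lngam _) (local_cond_a _)).
exact: (cont_local (cont_lngam _) (local_comp (local_upd _ _) (local_cond_a _))).
Qed.

Lemma phg_ext : ext_prop phg.
Proof.
move=> a' b.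
exists (fun w => ln (gam [fset 0]%fset (upd w 0 a')) - ln (gam [fset 0]%fset (upd w 0 b))).
move=> eps he; have [N HN] := main2 [fset 0]%fset he; exists N => n Hn w.
apply: HN => // k; rewrite in_fset1 /upd => /negbTE ->; by [].
Qed.

Lemma phg_gam (L : {fset int}) (w : config) : gammaphi phg L w = gam L w.
Proof.
rewrite /gammaphi.
have Er : forall z : {ffun L -> E}, rho phg (glue z w) w = ln (gam L (glue z w)) - ln (gam L w).
  move=> z; apply: limn_eq => eps he; have [N HN] := main2 L he.
  exists N => n Hn; apply: HN => //; exact: off_glue.
under eq_bigr do rewrite Er expRD expRN !lnK ?posrE ?(gam_pos hn) //.
have [_ hnorm _] := hs.
rewrite -mulr_suml hnorm mul1r invrK //.
Qed.

End H.

Unset Implicit Arguments.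

Theorem theorem4p2 (E : finType) (R : realType) (a : E) :
  (forall phi : config E -> R, cont phi -> ext_prop phi ->
     TI_gibbsian (gammaphi phi)) /\
  (forall gam : {fset int} -> config E -> R, TI_gibbsian gam ->
     [/\ cont (phi_gamma gam a), ext_prop (phi_gamma gam a) &
         forall (L : {fset int}) (w : config E),
           gammaphi (phi_gamma gam a) L w = gam L w]).
Proof.
split.
- by move=> phi hc hx; exact: part_i hc hx.
- move=> gam [[hs hn hcont] hti]; split.
  + exact: phg_cont hn hcont a.
  + exact: phg_ext hs hn hcont hti a.
  + by move=> L w; exact: phg_gam hs hn hcont hti a L w.
Qed.
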